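(* Let $G=(V=[n],w)$ be a connected loopless weighted graph with $\tilde h_G<h_G$. Then there is a fractional partition $(\rho,\eta)$ of $V$ with $\|\rho\|=\|\eta\|$ (so both equal $\mathrm{vol}(G)/2$) and $\tilde h(G;\rho,\eta)=\tilde h_G$.
   Context: A weighted graph is a pair $(V,w)$ with $V=[n]$ and $w:V\times V\to[0,1]$ symmetric; it is loopless if $w(v,v)=0$ for all $v$. Put $\mathrm{vol}(v)=\sum_{u}w(u,v)$, $\mathrm{vol}(G)=\sum_v\mathrm{vol}(v)$, and for $S\subseteq V$, $\mathrm{vol}(S)=\sum_{v\in S}\mathrm{vol}(v)$. $G$ is connected if $\sum_{u\in S,v\notin S}w(u,v)>0$ for every $\emptyset\ne S\subsetneq V$. The Cheeger constant is $h_G=\min_{\emptyset\ne S\subsetneq V}\frac{\sum_{u\in S,v\notin S}w(u,v)}{\min\{\mathrm{vol}(S),\mathrm{vol}(V\setminus S)\}}$. A fractional partition of $V$ is a pair $(\rho,\eta)$ of functions $V\to[0,1]$ with $\rho+\eta\equiv1$; $\|\rho\|=\sum_u\rho(u)\mathrm{vol}(u)$, $\|\eta\|=\sum_u\eta(u)\mathrm{vol}(u)$. When both are nonzero, $\tilde h(G;\rho,\eta)=\frac{\sum_{u,v}\rho(u)\eta(v)w(u,v)}{\min\{\|\rho\|,\|\eta\|\}}$, and $\tilde h_G=\inf\tilde h(G;\rho,\eta)$ over all such fractional partitions. *)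

(* Defs.v *)
(* real numbers R. Vertices V = [n] are encoded as 0..n-1. *)
From Stdlib Require Import Reals Lra List.
Open Scope R_scope.

Fixpoint rsum (n : nat) (f : nat -> R) : R :=
  match n with
  | O => 0
  | S m => rsum m f + f m
  end.

Definition weighted_graph (n : nat) (w : nat -> nat -> R) : Prop :=
  (forall u v, (u < n)%nat -> (v < n)%nat -> 0 <= w u v <= 1) /\
  (forall u v, (u < n)%nat -> (v < n)%nat -> w u v = w v u).

Definition loopless (n : nat) (w : nat -> nat -> R) : Prop :=
  forall v, (v < n)%nat -> w v v = 0.

Definition vol (n : nat) (w : nat -> nat -> R) (v : nat) : R :=
  rsum n (fun u => w u v).

Definition volG (n : nat) (w : nat -> nat -> R) : R :=
  rsum n (fun v => vol n w v).

(* subsets of [n] as boolean predicates (only values on 0..n-1 matter) *)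
Definition volS (n : nat) (w : nat -> nat -> R) (S : nat -> bool) : R :=
  rsum n (fun v => if S v then vol n w v else 0).

Definition cut (n : nat) (w : nat -> nat -> R) (S : nat -> bool) : R :=
  rsum n (fun u => rsum n (fun v =>
    if S u then (if S v then 0 else w u v) else 0)).

Definition proper_nonempty (n : nat) (S : nat -> bool) : Prop :=
  (exists v, (v < n)%nat /\ S v = true) /\
  (exists v, (v < n)%nat /\ S v = false).

Definition connected (n : nat) (w : nat -> nat -> R) : Prop :=
  forall S, proper_nonempty n S -> cut n w S > 0.

Definition cheeger_ratio (n : nat) (w : nat -> nat -> R) (S : nat -> bool) : R :=
  cut n w S / Rmin (volS n w S) (volS n w (fun v => negb (S v))).

Definition is_cheeger_constant (n : nat) (w : nat -> nat -> R) (h : R) : Prop :=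
  (exists S, proper_nonempty n S /\ cheeger_ratio n w S = h) /\
  (forall S, proper_nonempty n S -> h <= cheeger_ratio n w S).

Definition fractional_partition (n : nat) (rho eta : nat -> R) : Prop :=
  forall u, (u < n)%nat -> 0 <= rho u <= 1 /\ 0 <= eta u <= 1 /\ rho u + eta u = 1.

Definition fnorm (n : nat) (w : nat -> nat -> R) (rho : nat -> R) : R :=
  rsum n (fun u => rho u * vol n w u).

Definition frac_cut (n : nat) (w : nat -> nat -> R) (rho eta : nat -> R) : R :=
  rsum n (fun u => rsum n (fun v => rho u * eta v * w u v)).

Definition htilde (n : nat) (w : nat -> nat -> R) (rho eta : nat -> R) : R :=
  frac_cut n w rho eta / Rmin (fnorm n w rho) (fnorm n w eta).

Definition admissible (n : nat) (w : nat -> nat -> R) (rho eta : nat -> R) : Prop :=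
  fractional_partition n rho eta /\ fnorm n w rho <> 0 /\ fnorm n w eta <> 0.

Definition is_frac_cheeger_constant (n : nat) (w : nat -> nat -> R) (t : R) : Prop :=
  (forall rho eta, admissible n w rho eta -> t <= htilde n w rho eta) /\
  (forall t', (forall rho eta, admissible n w rho eta -> t' <= htilde n w rho eta) -> t' <= t).

(* Main.v *)
Require Import Defs.
From Stdlib Require Import Reals Lra Lia Classical List.
From Coquelicot Require Import Compactness.
Open Scope R_scope.

Lemma rsum_ext n f g : (forall k, (k < n)%nat -> f k = g k) -> rsum n f = rsum n g.
Proof. induction n; simpl; intros H; auto. rewrite IHn by (intros; apply H; lia). rewrite H by lia. reflexivity. Qed.

Lemma rsum_lin n a b f g h : (forall k, (k < n)%nat -> f k = a * g k + b * h k) ->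
  rsum n f = a * rsum n g + b * rsum n h.
Proof. induction n; simpl; intros H. ring. rewrite IHn by (intros; apply H; lia). rewrite H by lia. ring. Qed.

Lemma rsum_aff n x f f0 f1 : (forall k, (k < n)%nat -> f k = f0 k + x * (f1 k - f0 k)) ->
  rsum n f = rsum n f0 + x * (rsum n f1 - rsum n f0).
Proof. induction n; simpl; intros H. ring. rewrite IHn by (intros; apply H; lia). rewrite H by lia. ring. Qed.

Lemma rsum_scal n c f : rsum n (fun k => c * f k) = c * rsum n f.
Proof. induction n; simpl. ring. rewrite IHn. ring. Qed.

Lemma rsum_nonneg n f : (forall k, (k < n)%nat -> 0 <= f k) -> 0 <= rsum n f.
Proof. induction n; simpl; intros H. lra. assert (0 <= f n) by (apply H; lia).
  assert (0 <= rsum n f) by (apply IHn; intros; apply H; lia). lra. Qed.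

Lemma rsum_le n f g : (forall k, (k < n)%nat -> f k <= g k) -> rsum n f <= rsum n g.
Proof. induction n; simpl; intros H. lra. assert (f n <= g n) by (apply H; lia).
  assert (rsum n f <= rsum n g) by (apply IHn; intros; apply H; lia). lra. Qed.

Lemma rsum_abs n f g h : (forall k, (k < n)%nat -> Rabs (f k - g k) <= h k) ->
  Rabs (rsum n f - rsum n g) <= rsum n h.
Proof. induction n; simpl; intros H. rewrite Rminus_0_r, Rabs_R0. lra.
  assert (H1 := H n ltac:(lia)).
  assert (H2 : Rabs (rsum n f - rsum n g) <= rsum n h) by (apply IHn; intros; apply H; lia).
  replace (rsum n f + f n - (rsum n g + g n)) with ((rsum n f - rsum n g) + (f n - g n)) by ring.
  eapply Rle_trans. apply Rabs_triang. lra. Qed.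

Lemma rsum_zero n f : (forall k, (k < n)%nat -> f k = 0) -> rsum n f = 0.
Proof. intros H. rewrite (rsum_lin n 0 0 f f f). ring. intros; rewrite H; auto; ring. Qed.

Lemma rsum_ind n k g : (k < n)%nat -> rsum n (fun u => if Nat.eqb u k then g u else 0) = g k.
Proof. induction n; simpl; intros H. lia.
  destruct (Nat.eqb n k) eqn:E.
  - apply Nat.eqb_eq in E; subst.
    rewrite rsum_zero. ring.
    intros j Hj. destruct (Nat.eqb j k) eqn:E2; auto. apply Nat.eqb_eq in E2; lia.
  - apply Nat.eqb_neq in E. rewrite IHn by lia. ring. Qed.


Lemma rsum_swap n m f : rsum n (fun u => rsum m (fun v => f u v)) = rsum m (fun v => rsum n (fun u => f u v)).
Proof. induction n; simpl. symmetry; apply rsum_zero; auto.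
  rewrite IHn. symmetry. rewrite (rsum_lin m 1 1 _ (fun v => rsum n (fun u => f u v)) (fun v => f n v)). ring. intros; simpl; ring. Qed.

Definition cube n (r : nat -> R) := forall u, (u < n)%nat -> 0 <= r u <= 1.
Definition Fr n w r := frac_cut n w r (fun u => 1 - r u).
Definition upd (r : nat -> R) k x := fun u => if Nat.eqb u k then x else r u.

Lemma vol_nonneg n w v : weighted_graph n w -> (v < n)%nat -> 0 <= vol n w v.
Proof. intros [Hw _] Hv. unfold vol. apply rsum_nonneg. intros. apply Hw; auto. Qed.

Lemma volG_nonneg n w : weighted_graph n w -> 0 <= volG n w.
Proof. intros H. apply rsum_nonneg. intros. apply vol_nonneg; auto. Qed.

Lemma fnorm_ext n w r s : (forall u, (u < n)%nat -> r u = s u) -> fnorm n w r = fnorm n w s.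
Proof. intros H. apply rsum_ext. intros. rewrite H; auto. Qed.

Lemma frac_cut_ext n w r s r' s' : (forall u, (u < n)%nat -> r u = r' u) ->
  (forall u, (u < n)%nat -> s u = s' u) -> frac_cut n w r s = frac_cut n w r' s'.
Proof. intros H1 H2. apply rsum_ext. intros. apply rsum_ext. intros. rewrite H1, H2; auto. Qed.

Lemma Fr_ext n w r s : (forall u, (u < n)%nat -> r u = s u) -> Fr n w r = Fr n w s.
Proof. intros H. apply frac_cut_ext; intros; rewrite H; auto. Qed.

Lemma fnorm_compl n w r : fnorm n w (fun u => 1 - r u) = volG n w - fnorm n w r.
Proof. unfold fnorm, volG. rewrite (rsum_lin n 1 (-1) _ (fun u => vol n w u) (fun u => r u * vol n w u)).
  ring. intros; ring. Qed.

Lemma fnorm_nonneg n w r : weighted_graph n w -> cube n r -> 0 <= fnorm n w r.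
Proof. intros Hw Hr. apply rsum_nonneg. intros. apply Rmult_le_pos. apply Hr; auto. apply vol_nonneg; auto. Qed.

Lemma frac_cut_nonneg n w r s : weighted_graph n w -> (forall u, (u < n)%nat -> 0 <= r u) ->
  (forall u, (u < n)%nat -> 0 <= s u) -> 0 <= frac_cut n w r s.
Proof. intros [Hw _] Hr Hs. apply rsum_nonneg. intros. apply rsum_nonneg. intros.
  apply Rmult_le_pos. apply Rmult_le_pos; auto. apply Hw; auto. Qed.

Lemma Fr_nonneg n w r : weighted_graph n w -> cube n r -> 0 <= Fr n w r.
Proof. intros Hw Hr. apply frac_cut_nonneg; auto; intros u Hu; specialize (Hr u Hu); lra. Qed.

Lemma frac_cut_sym n w r s : weighted_graph n w -> frac_cut n w r s = frac_cut n w s r.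
Proof. intros [_ Hs]. unfold frac_cut. rewrite rsum_swap. apply rsum_ext. intros. apply rsum_ext. intros.
  rewrite Hs by auto. ring. Qed.

Lemma Fr_upd n w r k x : loopless n w -> (k < n)%nat ->
  Fr n w (upd r k x) = Fr n w (upd r k 0) + x * (Fr n w (upd r k 1) - Fr n w (upd r k 0)).
Proof. intros Hl Hk. unfold Fr, frac_cut. apply rsum_aff. intros u Hu. apply rsum_aff. intros v Hv.
  unfold upd. destruct (Nat.eqb u k) eqn:E1, (Nat.eqb v k) eqn:E2; try ring.
  apply Nat.eqb_eq in E1, E2; subst. rewrite Hl by auto. ring. Qed.

Lemma N_upd n w r k x : (k < n)%nat ->
  fnorm n w (upd r k x) = fnorm n w (upd r k 0) + x * vol n w k.
Proof. intros Hk. unfold fnorm. rewrite <- (rsum_ind n k (vol n w)) by auto.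
  rewrite (rsum_lin n 1 x _ (fun u => upd r k 0 u * vol n w u) (fun u => if Nat.eqb u k then vol n w u else 0)). ring.
  intros u Hu. unfold upd. destruct (Nat.eqb u k); ring. Qed.

Lemma upd_self r k : forall u, upd r k (r k) u = r u.
Proof. intros u. unfold upd. destruct (Nat.eqb u k) eqn:E; auto. apply Nat.eqb_eq in E; subst; auto. Qed.

Lemma upd_cube n r k x : cube n r -> 0 <= x <= 1 -> cube n (upd r k x).
Proof. intros H Hx u Hu. unfold upd. destruct (Nat.eqb u k); auto. Qed.

Definition good n w r (p : nat -> R) :=
  cube n p /\ 0 < fnorm n w p <= volG n w / 2 /\ Fr n w p <= r * fnorm n w p.

Lemma step n w r p k : weighted_graph n w -> loopless n w -> 0 <= r ->
  cube n p -> 0 < fnorm n w p < volG n w / 2 -> Fr n w p <= r * fnorm n w p -> (k < n)%nat ->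
  (forall u, (u < k)%nat -> p u = 0 \/ p u = 1) ->
  exists q, good n w r q /\ (fnorm n w q = volG n w / 2 \/ forall u, (u < S k)%nat -> q u = 0 \/ q u = 1).
Proof.
  intros Hw Hl Hr Hp HN HF Hk Hint.
  assert (EF : forall x, Fr n w (upd p k x) = Fr n w (upd p k 0) + x * (Fr n w (upd p k 1) - Fr n w (upd p k 0)))
    by (intros; apply Fr_upd; auto).
  assert (EN : forall x, fnorm n w (upd p k x) = fnorm n w (upd p k 0) + x * vol n w k)
    by (intros; apply N_upd; auto).
  assert (Fp : Fr n w p = Fr n w (upd p k (p k))) by (apply Fr_ext; intros; rewrite upd_self; auto).
  assert (Np : fnorm n w p = fnorm n w (upd p k (p k))) by (apply fnorm_ext; intros; rewrite upd_self; auto).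
  rewrite EF in Fp. rewrite EN in Np.
  set (F0 := Fr n w (upd p k 0)) in *. set (F1 := Fr n w (upd p k 1)) in *.
  set (N0 := fnorm n w (upd p k 0)) in *. set (V := vol n w k) in *. set (x0 := p k) in *.
  set (D := volG n w) in *.
  assert (HV : 0 <= V) by (apply vol_nonneg; auto).
  assert (Hx0 : 0 <= x0 <= 1) by (apply Hp; auto).
  assert (HF0 : 0 <= F0) by (apply Fr_nonneg; auto; apply upd_cube; auto; lra).
  assert (intg : forall x, (x = 0 \/ x = 1) -> forall u, (u < S k)%nat -> upd p k x u = 0 \/ upd p k x u = 1).
  { intros x Hx u Hu. unfold upd. destruct (Nat.eqb u k) eqn:E; auto. apply Nat.eqb_neq in E. apply Hint. lia. }
  destruct (Rle_or_lt ((F1 - F0) - r * V) 0) as [HB|HB].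
  - destruct (Rle_or_lt (N0 + V) (D/2)) as [HC|HC].
    + exists (upd p k 1). split; [split; [apply upd_cube; auto; lra|split]|].
      * rewrite EN. fold N0 V. assert (0 <= (1 - x0) * V) by (apply Rmult_le_pos; lra). fold D. lra.
      * rewrite EF, EN. fold F0 F1 N0 V D. nra.
      * right. apply intg; auto.
    + assert (HV' : 0 < V) by nra.
      set (x := (D/2 - N0) / V).
      assert (Hx : x * V = D/2 - N0) by (unfold x; field; lra).
      assert (Hxx0 : x0 <= x) by (apply (Rmult_le_reg_r V); nra).
      assert (Hx1 : x <= 1) by (apply (Rmult_le_reg_r V); nra).
      exists (upd p k x). split; [split; [apply upd_cube; auto; lra|split]|].
      * rewrite EN. fold N0 V D. lra.
      * rewrite EF, EN. fold F0 F1 N0 V D. nra.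
      * left. rewrite EN. fold N0 V D. lra.
  - exists (upd p k 0). split; [split; [apply upd_cube; auto; lra|split]|].
    + fold N0 D. split; [|nra].
      destruct (Req_dec x0 0) as [E|E].
      * rewrite E in Np. lra.
      * assert (F0 - r * N0 < 0) by nra. nra.
    + fold F0 N0. nra.
    + right. apply intg; auto.
Qed.

Lemma iterate n w r p : weighted_graph n w -> loopless n w -> 0 <= r -> good n w r p ->
  forall k, (k <= n)%nat -> exists q, good n w r q /\
    (fnorm n w q = volG n w / 2 \/ forall u, (u < k)%nat -> q u = 0 \/ q u = 1).
Proof.
  intros Hw Hl Hr Hp k. induction k; intros Hk.
  - exists p. split; auto. right. intros; lia.
  - destruct IHk as [q [Hq [Hb|Hi]]]; [lia| |].
    + exists q; auto.
    + destruct Hq as (Hc & HN & HF).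
      destruct (Req_dec (fnorm n w q) (volG n w / 2)) as [E|E].
      * exists q. split; [split; auto|]. auto.
      * apply (step n w r q k); auto; try lra; try lia.
Qed.

Lemma integral_case n w r h q : weighted_graph n w ->
  (forall S, proper_nonempty n S -> h <= cheeger_ratio n w S) ->
  good n w r q -> (forall u, (u < n)%nat -> q u = 0 \/ q u = 1) -> h <= r.
Proof.
  intros Hw Hch (Hc & HN & HF) Hi.
  set (S := fun u => if Req_dec_T (q u) 1 then true else false).
  assert (Hq : forall u, (u < n)%nat -> q u = if S u then 1 else 0).
  { intros u Hu. unfold S. destruct (Req_dec_T (q u) 1); auto. destruct (Hi u Hu); auto. contradiction. }
  assert (Ecut : cut n w S = Fr n w q).
  { unfold cut, Fr, frac_cut. apply rsum_ext. intros u Hu. apply rsum_ext. intros v Hv.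
    rewrite (Hq u Hu), (Hq v Hv). destruct (S u), (S v); ring. }
  assert (EvS : volS n w S = fnorm n w q).
  { unfold volS, fnorm. apply rsum_ext. intros u Hu. rewrite (Hq u Hu). destruct (S u); ring. }
  assert (EvC : volS n w (fun v => negb (S v)) = volG n w - fnorm n w q).
  { unfold volS, fnorm, volG. rewrite (rsum_lin n 1 (-1) _ (fun u => vol n w u) (fun u => q u * vol n w u)).
    ring. intros u Hu. rewrite (Hq u Hu). destruct (S u); simpl; ring. }
  assert (Hpn : proper_nonempty n S).
  { split.
    - destruct (classic (exists v, (v < n)%nat /\ S v = true)) as [H|H]; auto.
      exfalso. assert (fnorm n w q = 0).
      { apply rsum_zero. intros u Hu. rewrite (Hq u Hu). destruct (S u) eqn:E.
        - exfalso; apply H; eauto.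
        - ring. }
      lra.
    - destruct (classic (exists v, (v < n)%nat /\ S v = false)) as [H|H]; auto.
      exfalso. assert (fnorm n w q = volG n w).
      { apply rsum_ext. intros u Hu. rewrite (Hq u Hu). destruct (S u) eqn:E.
        - ring.
        - exfalso; apply H; eauto. }
      lra. }
  specialize (Hch S Hpn). unfold cheeger_ratio in Hch.
  rewrite Ecut, EvS, EvC, Rmin_left in Hch by lra.
  eapply Rle_trans; [exact Hch|].
  apply (Rmult_le_reg_r (fnorm n w q)); [lra|]. unfold Rdiv. rewrite Rmult_assoc, Rinv_l by lra. lra.
Qed.

Lemma key n w r h p : weighted_graph n w -> loopless n w -> 0 <= r -> r < h ->
  (forall S, proper_nonempty n S -> h <= cheeger_ratio n w S) ->
  good n w r p -> exists q, cube n q /\ fnorm n w q = volG n w / 2 /\ Fr n w q <= r * (volG n w / 2).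
Proof.
  intros Hw Hl Hr Hrh Hch Hp.
  destruct (iterate n w r p Hw Hl Hr Hp n (le_n n)) as [q [Hq [Hb|Hi]]].
  - exists q. destruct Hq as (? & ? & ?). rewrite <- Hb. auto.
  - exfalso. assert (h <= r) by (eapply integral_case; eauto). lra.
Qed.

Fixpoint tf (n : nat) : Compactness.Tn n R -> nat -> R :=
  match n return Compactness.Tn n R -> nat -> R with
  | O => fun _ _ => 0
  | S m => fun x k => match k with O => fst x | S k' => tf m (snd x) k' end
  end.

Fixpoint ft (n : nat) (f : nat -> R) : Compactness.Tn n R :=
  match n return Compactness.Tn n R with
  | O => tt
  | S m => (f O, ft m (fun k => f (S k)))
  end.

Lemma tf_ft n : forall f k, (k < n)%nat -> tf n (ft n f) k = f k.
Proof. induction n; intros f k Hk; [lia|]. destruct k; simpl; auto. rewrite IHn; auto. lia. Qed.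

Lemma bounded_tf n : forall f g x, bounded_n n (ft n f) (ft n g) x ->
  forall k, (k < n)%nat -> f k <= tf n x k <= g k.
Proof. induction n; intros f g x H k Hk; [lia|]. destruct x as [x1 x2]. simpl in H.
  destruct H as [H1 H2]. destruct k; simpl; auto.
  apply (IHn (fun k => f (S k)) (fun k => g (S k))); auto. lia. Qed.

Lemma bounded_ft n : forall f g p, (forall k, (k < n)%nat -> f k <= p k <= g k) ->
  bounded_n n (ft n f) (ft n g) (ft n p).
Proof. induction n; intros f g p H; simpl; auto. split. apply H; lia.
  apply IHn. intros; apply H; lia. Qed.

Lemma close_tf n : forall d x t, close_n n d x t -> forall k, (k < n)%nat -> Rabs (tf n x k - tf n t k) < d.
Proof. induction n; intros d x t H k Hk; [lia|]. destruct x as [x1 x2], t as [t1 t2]. simpl in H.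
  destruct H as [H1 H2]. destruct k; simpl; auto. apply IHn; auto. lia. Qed.

Lemma list_min {T} (l : list T) (Q : T -> Prop) (g : T -> R) :
  (forall t, Q t -> 0 < g t) -> exists c, 0 < c /\ forall t, In t l -> Q t -> c <= g t.
Proof. intros H. induction l as [|a l IH].
  - exists 1. split; [lra|]. intros t [].
  - destruct IH as [c [Hc Hl]].
    destruct (classic (Q a)) as [Qa|Qa].
    + exists (Rmin c (g a)). split. apply Rmin_glb_lt; auto.
      intros t [<-|Ht] Qt. apply Rmin_r. eapply Rle_trans. apply Rmin_l. auto.
    + exists c. split; auto. intros t [<-|Ht] Qt; [contradiction|auto].
Qed.

Lemma abs_le_inv x y : Rabs x <= y -> -y <= x <= y.
Proof. intros H. assert (H0 := Rle_abs (-x)). rewrite Rabs_Ropp in H0. assert (H1 := Rle_abs x). lra. Qed.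

Lemma compact_min n (Fn Nn : (nat -> R) -> R) c m0 K1 K2 :
  0 <= K1 -> 0 <= K2 ->
  (forall p q, cube n p -> cube n q -> forall d, (forall u, (u < n)%nat -> Rabs (p u - q u) < d) ->
     Rabs (Fn p - Fn q) <= K1 * d /\ Rabs (Nn p - Nn q) <= K2 * d) ->
  (forall g, 0 < g -> exists p, cube n p /\ Nn p = c /\ Fn p < m0 + g) ->
  exists p, cube n p /\ Nn p = c /\ Fn p <= m0.
Proof.
  intros HK1 HK2 HL Happ.
  destruct (classic (exists p, cube n p /\ Nn p = c /\ Fn p <= m0)) as [|Hn]; auto. exfalso.
  assert (H : forall p, cube n p -> Nn p = c -> m0 < Fn p).
  { intros p Hp HN. apply Rnot_le_lt. intros HF. apply Hn. eauto. }
  set (a := ft n (fun _ => 0)). set (b := ft n (fun _ => 1)).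
  assert (Hb : forall x, bounded_n n a b x -> cube n (tf n x)).
  { intros x Hx u Hu. apply (bounded_tf n _ _ x Hx u Hu). }
  set (v := fun x => if Req_dec_T (Nn (tf n x)) c then (Fn (tf n x) - m0) / (2 * (K1 + 1))
                     else Rabs (Nn (tf n x) - c) / (2 * (K2 + 1))).
  assert (Hv : forall x, bounded_n n a b x -> 0 < v x).
  { intros x Hx. unfold v. destruct (Req_dec_T (Nn (tf n x)) c) as [E|E].
    - assert (m0 < Fn (tf n x)) by (apply H; auto). apply Rdiv_lt_0_compat; lra.
    - apply Rdiv_lt_0_compat; [|lra]. apply Rabs_pos_lt. lra. }
  set (delta := fun x => match Rlt_dec 0 (v x) with left P => mkposreal (v x) P | right _ => mkposreal 1 Rlt_0_1 end).
  assert (Hd : forall x, bounded_n n a b x -> pos (delta x) = v x).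
  { intros x Hx. unfold delta. destruct (Rlt_dec 0 (v x)) as [P|P]; simpl; auto. exfalso; apply P, Hv; auto. }
  apply (compactness_list n a b delta). intros [l Hl].
  destruct (list_min l (fun t => bounded_n n a b t /\ Nn (tf n t) = c) (fun t => (Fn (tf n t) - m0) / 2))
    as [g [Hg Hgl]].
  { intros t [Ht Ht2]. assert (m0 < Fn (tf n t)) by (apply H; auto). lra. }
  destruct (Happ g Hg) as [p [Hp [HNp HFp]]].
  destruct (Hl (ft n p)) as [t [Hin [Hbt Hct]]].
  { apply bounded_ft. intros; apply Hp; auto. }
  assert (Hct' : forall u, (u < n)%nat -> Rabs (p u - tf n t u) < v t).
  { intros u Hu. rewrite <- Hd by auto. rewrite <- (tf_ft n p u Hu). apply close_tf; auto. }
  destruct (HL p (tf n t) Hp (Hb t Hbt) (v t) Hct') as [L1 L2].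
  assert (Hvt := Hv t Hbt).
  unfold v in L1, L2, Hvt. destruct (Req_dec_T (Nn (tf n t)) c) as [E|E].
  - set (G := Fn (tf n t)) in *. set (e := (G - m0) / (2 * (K1 + 1))) in *.
    assert (HG : G - m0 = 2 * (K1 + 1) * e) by (unfold e; field; lra).
    assert (g <= (G - m0) / 2) by (apply Hgl; auto).
    apply abs_le_inv in L1. nra.
  - set (e := Rabs (Nn (tf n t) - c) / (2 * (K2 + 1))) in *.
    assert (HG : Rabs (Nn (tf n t) - c) = 2 * (K2 + 1) * e) by (unfold e; field; lra).
    rewrite HNp, Rabs_minus_sym in L2. nra.
Qed.

Definition Ksum n w := rsum n (fun u => rsum n (fun v => w u v)).

Lemma Fr_lip n w p q d : weighted_graph n w -> cube n p -> cube n q ->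
  (forall u, (u < n)%nat -> Rabs (p u - q u) < d) -> Rabs (Fr n w p - Fr n w q) <= (2 * Ksum n w) * d.
Proof.
  intros [Hw _] Hp Hq Hd. unfold Fr, frac_cut.
  eapply Rle_trans. apply (rsum_abs n _ _ (fun u => rsum n (fun v => (2 * d) * w u v))).
  - intros u Hu. apply rsum_abs. intros v Hv.
    destruct (Hp u Hu), (Hp v Hv), (Hq u Hu), (Hq v Hv), (Hw u v Hu Hv).
    destruct (Rabs_def2 _ _ (Hd u Hu)). destruct (Rabs_def2 _ _ (Hd v Hv)).
    apply Rabs_le.
    replace (p u * (1 - p v) * w u v - q u * (1 - q v) * w u v) with
      (w u v * ((p u - q u) * (1 - p v) - q u * (p v - q v))) by ring.
    assert (A1 : - d <= (p u - q u) * (1 - p v) <= d) by nra.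
    assert (A2 : - d <= q u * (p v - q v) <= d) by nra.
    split; nra.
  - right. unfold Ksum. rewrite (rsum_ext _ _ (fun u => (2 * d) * rsum n (fun v => w u v))).
    rewrite rsum_scal. ring. intros. apply rsum_scal.
Qed.

Lemma N_lip n w p q d : weighted_graph n w ->
  (forall u, (u < n)%nat -> Rabs (p u - q u) < d) -> Rabs (fnorm n w p - fnorm n w q) <= volG n w * d.
Proof.
  intros Hw Hd. unfold fnorm, volG.
  eapply Rle_trans. apply (rsum_abs n _ _ (fun u => d * vol n w u)).
  - intros u Hu. replace (p u * vol n w u - q u * vol n w u) with ((p u - q u) * vol n w u) by ring.
    rewrite Rabs_mult, (Rabs_right (vol n w u)).
    + apply Rmult_le_compat_r. apply vol_nonneg; auto. left; auto.
    + apply Rle_ge, vol_nonneg; auto.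
  - right. rewrite rsum_scal. apply Rmult_comm.
Qed.

Theorem mainTheorem11 (n : nat) (w : nat -> nat -> R) (hG ht : R) :
  weighted_graph n w -> loopless n w -> connected n w ->
  is_cheeger_constant n w hG ->
  is_frac_cheeger_constant n w ht ->
  ht < hG ->
  exists rho eta : nat -> R,
    admissible n w rho eta /\
    fnorm n w rho = fnorm n w eta /\
    htilde n w rho eta = ht.
Proof.
  intros Hw Hl _ [_ Hch] [Hlow Hsup] Hlt.
  set (D := volG n w).
  assert (Happ : forall e, 0 < e -> exists rho eta, admissible n w rho eta /\ htilde n w rho eta < ht + e).
  { intros e He. apply NNPP; intro Hn.
    assert (ht + e <= ht); [|lra].
    apply Hsup. intros rho eta Ha. apply Rnot_lt_le. intro. apply Hn. eauto. }
  assert (Hadm : forall rho eta, admissible n w rho eta ->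
     cube n rho /\ cube n eta /\ fnorm n w eta = D - fnorm n w rho /\
     0 < fnorm n w rho /\ 0 < fnorm n w eta /\ (forall u, (u < n)%nat -> eta u = 1 - rho u)).
  { intros rho eta [Hfp [H1 H2]].
    assert (Hc1 : cube n rho) by (intros u Hu; apply Hfp; auto).
    assert (Hc2 : cube n eta) by (intros u Hu; apply Hfp; auto).
    assert (He : forall u, (u < n)%nat -> eta u = 1 - rho u) by (intros u Hu; destruct (Hfp u Hu) as (_ & _ & E); lra).
    assert (fnorm n w eta = D - fnorm n w rho).
    { rewrite (fnorm_ext n w eta (fun u => 1 - rho u)) by auto. apply fnorm_compl. }
    assert (0 <= fnorm n w rho) by (apply fnorm_nonneg; auto).
    assert (0 <= fnorm n w eta) by (apply fnorm_nonneg; auto).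
    split; [auto|split; [auto|split; [auto|split; [lra|split; [lra|auto]]]]]. }
  assert (HD : 0 < D).
  { destruct (Happ 1 Rlt_0_1) as (rho & eta & Ha & _). destruct (Hadm rho eta Ha) as (_ & _ & E & P1 & P2 & _). lra. }
  assert (Hbal : forall rho eta, admissible n w rho eta -> htilde n w rho eta < hG ->
     exists q, cube n q /\ fnorm n w q = D / 2 /\ Fr n w q <= htilde n w rho eta * (D / 2)).
  { intros rho eta Ha Hh. destruct (Hadm rho eta Ha) as (Hc1 & Hc2 & E & P1 & P2 & He).
    set (r := htilde n w rho eta) in *.
    assert (Hfc : 0 <= frac_cut n w rho eta) by (apply frac_cut_nonneg; auto; intros u Hu; apply Hc1 || apply Hc2; auto).
    assert (Hmin : 0 < Rmin (fnorm n w rho) (fnorm n w eta)) by (apply Rmin_glb_lt; auto).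
    assert (Hr : 0 <= r) by (unfold r, htilde; unfold Rdiv; apply Rmult_le_pos; [auto|left; apply Rinv_0_lt_compat; auto]).
    assert (Hr2 : r * Rmin (fnorm n w rho) (fnorm n w eta) = frac_cut n w rho eta) by (unfold r, htilde; field; lra).
    destruct (Rle_or_lt (fnorm n w rho) (D / 2)) as [C|C].
    - rewrite Rmin_left in Hr2 by lra.
      apply (key n w r hG rho); auto.
      split; [auto|split; [fold D; lra|]].
      unfold Fr. rewrite (frac_cut_ext n w rho (fun u => 1 - rho u) rho eta); [lra|auto|].
      intros; rewrite He; auto.
    - rewrite Rmin_right in Hr2 by lra.
      apply (key n w r hG eta); auto.
      split; [auto|split; [fold D; lra|]].
      unfold Fr. rewrite (frac_cut_ext n w eta (fun u => 1 - eta u) eta rho); [|auto|].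
      + rewrite frac_cut_sym by auto. lra.
      + intros; rewrite He; auto; ring. }
  assert (Hlower : forall q, cube n q -> fnorm n w q = D / 2 -> ht * (D / 2) <= Fr n w q).
  { intros q Hq HN.
    assert (Ha : admissible n w q (fun u => 1 - q u)).
    { split; [|split].
      - intros u Hu. destruct (Hq u Hu). lra.
      - fold D. lra.
      - rewrite fnorm_compl. fold D. lra. }
    specialize (Hlow _ _ Ha). unfold htilde in Hlow. rewrite fnorm_compl in Hlow. fold D in Hlow.
    rewrite HN in Hlow. replace (D - D / 2) with (D / 2) in Hlow by field.
    rewrite Rmin_left in Hlow by lra. fold (Fr n w q) in Hlow.
    apply (Rmult_le_compat_r (D / 2)) in Hlow; [|lra].
    replace (Fr n w q / (D / 2) * (D / 2)) with (Fr n w q) in Hlow by (field; lra). lra. }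
  assert (Happ2 : forall g, 0 < g -> exists q, cube n q /\ fnorm n w q = D / 2 /\ Fr n w q < ht * (D / 2) + g).
  { intros g Hg.
    set (e := Rmin (g / D) (hG - ht)).
    assert (He : 0 < e) by (apply Rmin_glb_lt; [apply Rdiv_lt_0_compat|]; lra).
    assert (He1 : e * D <= g).
    { assert (e <= g / D) by apply Rmin_l. apply (Rmult_le_compat_r D) in H; [|lra].
      replace (g / D * D) with g in H by (field; lra). lra. }
    assert (He2 : e <= hG - ht) by apply Rmin_r.
    destruct (Happ e He) as (rho & eta & Ha & Hh).
    destruct (Hbal rho eta Ha) as (q & Hq & HN & HF); [lra|].
    exists q. split; auto. split; auto.
    assert (htilde n w rho eta * (D / 2) < (ht + e) * (D / 2)) by (apply Rmult_lt_compat_r; lra).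
    lra. }
  destruct (compact_min n (Fr n w) (fnorm n w) (D / 2) (ht * (D / 2)) (2 * Ksum n w) D)
    as (q & Hq & HN & HF).
  - assert (0 <= Ksum n w); [|lra]. unfold Ksum. apply rsum_nonneg; intros; apply rsum_nonneg; intros.
    apply Hw; auto.
  - lra.
  - intros p q Hp Hq d Hd. split. apply Fr_lip; auto. apply N_lip; auto.
  - exact Happ2.
  - assert (Fr n w q = ht * (D / 2)) by (specialize (Hlower q Hq HN); lra).
    exists q, (fun u => 1 - q u).
    assert (E : fnorm n w (fun u => 1 - q u) = D / 2) by (rewrite fnorm_compl; fold D; lra).
    split; [split; [|split]|split].
    + intros u Hu. destruct (Hq u Hu). lra.
    + lra.
    + lra.
    + lra.
    + unfold htilde. rewrite E, HN, Rmin_left by lra. fold (Fr n w q). rewrite H. field. lra.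
Qed.
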